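(* Let $k\ge1$ and $\mathcal{H}\subset\mathbb{Z}^k\setminus\{\mathbf{0}\}$. Then $\gamma(\mathcal{H})\le\delta(\mathcal{H})$.
   Context: $\lVert x\rVert$ denotes the distance from $x\in\mathbb{R}$ to the nearest integer and $\cdot$ the standard inner product. Let $\mathcal{T}(\mathcal{H})$ be the set of real trigonometric polynomials $T(\mathbf{x})=a_0+\sum_{\mathbf{h}\in\mathcal{H}}a_{\mathbf{h}}\cos(2\pi\mathbf{h}\cdot\mathbf{x})$ (finitely many nonzero real $a_{\mathbf{h}}$) with $T(\mathbf{x})\ge0$ for all $\mathbf{x}\in\mathbb{R}^k$ and $T(\mathbf{0})=1$. Define $\delta(\mathcal{H})=\inf_{T\in\mathcal{T}(\mathcal{H})}a_0$ and $\gamma(\mathcal{H})=\sup_{\xi\in\mathbb{R}^k}\inf_{\mathbf{h}\in\mathcal{H}}\lVert\mathbf{h}\cdot\xi\rVert$. *)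

(* Defs.v *)
From HB Require Import structures.
From mathcomp Require Import all_boot all_order all_algebra.
From mathcomp Require Import all_classical all_reals all_analysis.
Set Implicit Arguments. Unset Strict Implicit. Unset Printing Implicit Defensive.
Import Order.TTheory GRing.Theory Num.Theory.
Local Open Scope classical_set_scope.
Local Open Scope ring_scope.

Definition zvec (k : nat) := 'I_k -> int.
Definition rvec (R : realType) (k : nat) := 'I_k -> R.

Definition dotZR {R : realType} {k : nat} (h : zvec k) (x : rvec R k) : R :=
  \sum_(i < k) (h i)%:~R * x i.

Definition dist_int {R : realType} (x : R) : R :=
  inf [set `|x - n%:~R| | n in [set: int]].

(* value at x of T(x) = a0 + sum_{h in s} a_h cos(2 pi h.x),
   s a duplicate-free finite list of frequencies carrying the
   (possibly) nonzero coefficients *)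
Definition trig_eval {R : realType} {k : nat} (a0 : R) (s : seq (zvec k))
  (a : zvec k -> R) (x : rvec R k) : R :=
  a0 + \sum_(h <- s) a h * cos (2 * pi * dotZR h x).

Definition in_TH {R : realType} {k : nat} (H : set (zvec k)) (a0 : R)
  (s : seq (zvec k)) (a : zvec k -> R) : Prop :=
  uniq s /\ (forall h, h \in s -> H h) /\
  (forall x : rvec R k, 0 <= trig_eval a0 s a x) /\
  trig_eval a0 s a (fun _ => 0) = 1.

Definition delta {R : realType} {k : nat} (H : set (zvec k)) : \bar R :=
  ereal_inf [set a0%:E | a0 in [set a0 : R | exists s a, in_TH H a0 s a]].

Definition gamma {R : realType} {k : nat} (H : set (zvec k)) : \bar R :=
  ereal_sup [set ereal_inf [set (dist_int (dotZR h xi))%:E | h in H]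
            | xi in [set: rvec R k]].

(* Main.v *)
Require Import Defs.
From HB Require Import structures.
From mathcomp Require Import all_boot all_order all_algebra.
From mathcomp Require Import all_classical all_reals all_analysis.
Import Order.TTheory GRing.Theory Num.Theory.
Local Open Scope classical_set_scope.
Local Open Scope ring_scope.
From mathcomp Require Import ring lra zify.
Section S.
Variable R : realType.

Lemma dist_lb (x : R) : has_lbound [set `|x - n%:~R| | n in [set: int]].
Proof. by exists 0 => _ [n _ <-]. Qed.

Lemma dist_le (x : R) (j : int) : dist_int x <= `|x - j%:~R|.
Proof. by apply: ge_inf; [exact: dist_lb | exists j]. Qed.

Lemma dist_ge0 (x : R) : 0 <= dist_int x.
Proof. by apply: lb_le_inf; [exists `|x - 0%:~R|, 0 | move=> _ [n _ <-]]. Qed.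

Lemma dist_lip (x y : R) : dist_int x <= dist_int y + `|x - y|.
Proof.
rewrite -lerBlDr; apply: lb_le_inf; first by exists `|y - 0%:~R|, 0.
move=> _ [n _ <-]; rewrite lerBlDr.
apply: (le_trans (dist_le x n)).
have -> : x - n%:~R = (y - n%:~R) + (x - y) by ring.
exact: ler_normD.
Qed.

Lemma dist_le1 (x : R) : dist_int x <= 1.
Proof.
apply: (le_trans (dist_le x (Num.floor x))).
have := floor_itv x; rewrite rmorphD /= => /andP [h1 h2].
rewrite ger0_norm ?subr_ge0 //; lra.
Qed.
Lemma cos_period_int (z : int) (x : R) : cos (x + 2 * pi * z%:~R) = cos x.
Proof.
have h n y : cos (y + 2 * pi * n%:R) = cos y :> R.
  by rewrite -(periodicn (@cosD2pi R) n y) mulr_natr mulr2n mulrDl mul1r.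
case: z => n; first by rewrite h.
rewrite NegzE -(h n.+1) -addrA.
by rewrite [X in _ + X](_ : _ = 0) ?addr0 // rmorphN /= mulrN addNr.
Qed.

Lemma sin_period_int (z : int) (x : R) : sin (x + 2 * pi * z%:~R) = sin x.
Proof.
have h n y : sin (y + 2 * pi * n%:R) = sin y :> R.
  by rewrite -(periodicn (@sinD2pi R) n y) mulr_natr mulr2n mulrDl mul1r.
case: z => n; first by rewrite h.
rewrite NegzE -(h n.+1) -addrA.
by rewrite [X in _ + X](_ : _ = 0) ?addr0 // rmorphN /= mulrN addNr.
Qed.

Lemma sum_cos_nat (t q : nat) : (0 < t)%N -> (t < q)%N ->
  \sum_(n < q) cos (2 * pi * t%:R / q%:R * n%:R) = 0 :> R.
Proof.
move=> t0 tq.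
have q0 : (0 < q%:R :> R) by rewrite ltr0n; apply: leq_trans tq.
set th := 2 * pi * t%:R / q%:R.
set h := th / 2.
have hpos : 0 < sin h.
  have -> : h = pi * (t%:R / q%:R).
    rewrite /h /th; field; by rewrite pnatr_eq0 -lt0n; apply: leq_trans tq.
  have tq1 : t%:R / q%:R < 1 :> R by rewrite ltr_pdivrMr // mul1r ltr_nat.
  have tq0 : 0 < t%:R / q%:R :> R by rewrite divr_gt0 // ltr0n.
  apply: sin_gt0_pi; apply/andP; split; first by rewrite mulr_gt0 // pi_gt0.
  by rewrite -[X in _ < X]mulr1 ltr_pM2l // pi_gt0.
suff : sin h * 2 * \sum_(n < q) cos (th * n%:R) = 0.
  by move/eqP; rewrite mulf_eq0 mulf_eq0 gt_eqF //= pnatr_eq0 /= => /eqP.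
rewrite mulr_sumr.
have -> : \sum_(i < q) sin h * 2 * cos (th * i%:R) =
  \sum_(0 <= i < q) (sin (th * i.+1%:R - h) - sin (th * i%:R - h)).
  rewrite big_mkord; apply: eq_bigr => i _.
  have -> : th * i.+1%:R - h = th * i%:R + h.
    by rewrite /h -natr1 mulrDr mulr1; field.
  by rewrite sinD sinB; ring.
rewrite telescope_sumr // mulr0 add0r sinN opprK.
have -> : th * q%:R - h = - h + 2 * pi * (t%:R : R).
  rewrite /th -mulrA mulVf ?gt_eqF // mulr1 -[X in X - _]mulrA. ring.
have := sin_period_int (Posz t) (- h); rewrite /= sinN => ->.
by rewrite addNr.
Qed.

Lemma sum_cos_int (q : nat) (r : int) : (0 < q)%N ->
  (forall j : int, r != j * q%:Z) ->
  \sum_(n < q) cos (2 * pi * r%:~R / q%:R * n%:R) = 0 :> R.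
Proof.
move=> q0 hr.
have qz : q%:Z != 0 by rewrite eqz_nat -lt0n.
have r0 : (0 <= (r %% q)%Z) by apply: modz_ge0.
have rq : ((r %% q)%Z < q%:Z) by apply: ltz_pmod; rewrite ltz_nat.
case E: (r %% q)%Z r0 rq => [t|//] _ rq.
have t0 : (0 < t)%N.
  rewrite lt0n; apply/eqP => t0; move: (hr (r %/ q)%Z).
  by rewrite {1}(divz_eq r q) E t0 addr0 eqxx.
have tq : (t < q)%N by rewrite -ltz_nat.
rewrite -[RHS](@sum_cos_nat t q t0 tq); apply: eq_bigr => n _.
rewrite {1}(divz_eq r q) E.
rewrite -[RHS](cos_period_int ((r %/ q)%Z * n%:Z)).
congr cos.
rewrite !rmorphD !rmorphM /=.
have qR : (q%:R : R) != 0 by rewrite pnatr_eq0 -lt0n.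
change ((q%:Z)%:~R : R) with (q%:R : R).
change ((t%:Z)%:~R : R) with (t%:R : R).
change ((n%:Z)%:~R : R) with (n%:R : R).
by field.
Qed.

Lemma core (X : eqType) (s : seq X) (a : X -> R) (m : X -> int) (a0 : R)
  (q L : nat) : (0 < L)%N -> (L <= q)%N ->
  (forall h, h \in s -> forall j : int, L%:Z <= `|m h - j * q%:Z|) ->
  (forall n : nat, 0 <= a0 + \sum_(h <- s) a h * cos (2 * pi * (m h)%:~R / q%:R * n%:R)) ->
  a0 + \sum_(h <- s) a h = 1 ->
  L%:R / q%:R <= a0.
Proof.
move=> L0 Lq Hm HP H0.
have q0 : (0 < q)%N by apply: leq_trans Lq.
have qR : (0 < q%:R :> R) by rewrite ltr0n.
pose F (r : int) (n : nat) := cos (2 * pi * r%:~R / q%:R * n%:R) : R.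
pose W (n : nat) := (\sum_(i < L) cos (2 * pi * i%:R / q%:R * n%:R)) ^+ 2 +
                    (\sum_(i < L) sin (2 * pi * i%:R / q%:R * n%:R)) ^+ 2 : R.
have W0 n : 0 <= W n by rewrite /W addr_ge0 // sqr_ge0.
have WE n : W n = \sum_(i < L) \sum_(j < L) F (i%:Z - j%:Z) n.
  rewrite /W !expr2 !big_distrlr /= -big_split /=; apply: eq_bigr => i _.
  rewrite -big_split /=; apply: eq_bigr => j _.
  rewrite /F -cosB; congr cos; rewrite rmorphB /=.
  change ((i%:Z)%:~R : R) with (i%:R : R); change ((j%:Z)%:~R : R) with (j%:R : R).
  by field; rewrite gt_eqF.
have F0 n : F 0 n = 1 by rewrite /F mulr0 mul0r mul0r cos0.
have orth r : (forall jj : int, r != jj * q%:Z) -> \sum_(n < q) F r n = 0.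
  by move=> hr; apply: sum_cos_int.
have E1 : \sum_(n < q) W n = L%:R * q%:R.
  under eq_bigr do rewrite WE.
  rewrite exchange_big /=.
  under eq_bigr do rewrite exchange_big /=.
  rewrite -[L in L%:R * _]card_ord -sum1_card natr_sum mulr_suml.
  apply: eq_bigr => i _.
  rewrite (bigD1 i) //= [X in _ + X]big1 ?addr0.
    by rewrite subrr; under eq_bigr do rewrite F0; rewrite sumr_const card_ord mul1r.
  move=> j ji; apply: orth => jj; apply/eqP => E.
  have hi := ltn_ord i; have hj := ltn_ord j.
  have ij : (i : nat) != j by rewrite eq_sym.
  have : (jj = 0 \/ 1 <= jj \/ jj <= -1) by lia.
  case=> [?|[?|?]]; nia.
have E2 h : h \in s -> \sum_(n < q) W n * F (m h) n = 0.
  move=> hs.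
  under eq_bigr do rewrite WE mulr_suml.
  rewrite exchange_big /= big1 // => i _.
  under eq_bigr do rewrite mulr_suml.
  rewrite exchange_big /= big1 // => j _.
  have -> : \sum_(n < q) F (i%:Z - j%:Z) n * F (m h) n =
     (\sum_(n < q) F (i%:Z - j%:Z + m h) n + \sum_(n < q) F (i%:Z - j%:Z - m h) n) / 2.
    rewrite -big_split /= mulr_suml; apply: eq_bigr => n _.
    rewrite /F [(_ + m h)%:~R]rmorphD [(_ - m h)%:~R]rmorphB /=.
    set x := ((i%:Z - j%:Z)%:~R : R); set y := ((m h)%:~R : R).
    have e1 : 2 * pi * (x + y) / q%:R * n%:R =
       2 * pi * x / q%:R * n%:R + 2 * pi * y / q%:R * n%:R by ring.
    have e2 : 2 * pi * (x - y) / q%:R * n%:R =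
       2 * pi * x / q%:R * n%:R - 2 * pi * y / q%:R * n%:R by ring.
    by rewrite e1 e2 cosD cosB; field.
  have hi := ltn_ord i; have hj := ltn_ord j.
  rewrite !orth ?addr0 ?mul0r // => jj; apply/eqP => E; have := Hm h hs.
    by move=> /(_ (- jj)); lia.
  by move=> /(_ jj); lia.
set S := \sum_(n < q) W n * (a0 + \sum_(h <- s) a h * F (m h) n).
have SE : S = a0 * (L%:R * q%:R).
  rewrite /S -E1 mulr_sumr.
  under eq_bigr do rewrite mulrDr mulr_sumr.
  rewrite big_split /=; under eq_bigr do rewrite mulrC.
  rewrite [X in _ + X]exchange_big /= [X in _ + X]big_seq_cond [X in _ + X]big1 ?addr0 //.
  move=> h /andP [hs _].
  rewrite (eq_bigr (fun n : 'I_q => a h * (W n * F (m h) n))) => [|n _].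
    by rewrite -mulr_sumr E2 // mulr0.
  by rewrite mulrCA.
have SL : (L%:R) ^+ 2 <= S.
  rewrite /S (bigD1 (Ordinal q0)) //=.
  have -> : W 0 = L%:R ^+ 2.
    rewrite /W; under eq_bigr do rewrite mulr0 cos0.
    under [X in _ + X ^+ 2]eq_bigr do rewrite mulr0 sin0.
    by rewrite big1_eq expr0n /= addr0 sumr_const card_ord.
  have -> : a0 + \sum_(h <- s) a h * F (m h) 0 = 1.
    by rewrite -H0; congr (_ + _); apply: eq_bigr => h _; rewrite /F mulr0 cos0 mulr1.
  rewrite mulr1 lerDl; apply: sumr_ge0 => n _; apply: mulr_ge0 => //; exact: HP.
have : L%:R ^+ 2 <= a0 * (L%:R * q%:R) by rewrite -SE.
rewrite ler_pdivrMr // expr2 mulrA [a0 * _]mulrC -mulrA ler_pM2l ?ltr0n //; exact: id.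
Qed.

Lemma dot_scale k (h : zvec k) (p : 'I_k -> int) (c : R) :
  dotZR h (fun i => c * (p i)%:~R) = c * (\sum_(i < k) h i * p i)%:~R.
Proof.
rewrite /dotZR rmorph_sum mulr_sumr; apply: eq_bigr => i _.
by rewrite rmorphM /=; ring.
Qed.

Lemma dot0 k (h : zvec k) : dotZR h (fun _ => 0 : R) = 0.
Proof. by rewrite /dotZR big1 // => i _; rewrite mulr0. Qed.

Lemma rational k (H : set (zvec k)) (a0 : R) s a (q : nat) (p : 'I_k -> int) :
  (0 < q)%N -> 0 <= a0 -> s != [::] -> in_TH H a0 s a ->
  exists h, h \in s /\ dist_int (dotZR h (fun i => q%:R^-1 * (p i)%:~R)) <= a0.
Proof.
move=> q0 a00 sn [us [sH [Tpos T0]]].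
have qR : (0 < q%:R :> R) by rewrite ltr0n.
pose m (h : zvec k) := \sum_(i < k) h i * p i.
have dm h : dotZR h (fun i => q%:R^-1 * (p i)%:~R) = (m h)%:~R / q%:R :> R.
  by rewrite dot_scale mulrC.
apply: contrapT => nE.
have Hd h : h \in s -> a0 < dist_int ((m h)%:~R / q%:R :> R).
  move=> hs; rewrite ltNge; apply/negP => hle; apply: nE; exists h.
  by rewrite dm.
pose L := (Num.truncn (a0 * q%:R)).+1.
have aL : a0 * q%:R < L%:R by exact: truncnS_gt.
have tr : (Num.truncn (a0 * q%:R))%:R <= a0 * q%:R.
  by rewrite truncn_le mulr_ge0 // ltW.
have Hm h : h \in s -> forall j : int, L%:Z <= `|m h - j * q%:Z|.
  move=> hs j; rewrite leNgt; apply/negP => hlt.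
  have hle : `|m h - j * q%:Z| <= (Num.truncn (a0 * q%:R))%:Z by lia.
  have := Hd h hs; have := dist_le ((m h)%:~R / q%:R :> R) j => h1 h2.
  have h3 : a0 * q%:R < `|(m h - j * q%:Z)%:~R| :> R.
    rewrite rmorphB rmorphM /=.
    have -> : (m h)%:~R - j%:~R * (q%:Z)%:~R = ((m h)%:~R / q%:R - j%:~R) * q%:R :> R.
      by change ((q%:Z)%:~R : R) with (q%:R : R); field; rewrite gt_eqF.
    rewrite normrM (gtr0_norm qR) ltr_pM2r //; exact: lt_le_trans h1.
  move: hle; rewrite -(ler_int R) intr_norm => hle.
  have : `|(m h - j * q%:Z)%:~R| <= a0 * q%:R :> R by apply: (le_trans hle).
  by rewrite leNgt h3.
have Lq : (L <= q)%N.
  case: s sn us Tpos T0 sH nE Hd Hm => // h0 s' _ _ _ _ _ _ _ Hm.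
  have := Hm h0 (mem_head _ _) (m h0 %/ q)%Z.
  have := divz_eq (m h0) q; have := @modz_ge0 (m h0) q;
  have := @ltz_pmod (m h0) q.
  rewrite ltz_nat eqz_nat -lt0n q0 => /(_ isT) ? /(_ isT) ? ? ?; lia.
have : L%:R / q%:R <= a0.
  apply: (@core _ s a m a0 q L) => //.
    move=> n; have := Tpos (fun i => (n%:R / q%:R) * (p i)%:~R).
    rewrite /trig_eval; congr (_ <= _ + _); apply: eq_bigr => h _.
    rewrite dot_scale; congr (_ * cos _); rewrite -/(m h); ring.
  move: T0; rewrite /trig_eval => <-; congr (_ + _); apply: eq_bigr => h _.
  by rewrite dot0 mulr0 cos0 mulr1.
by rewrite ler_pdivrMr // leNgt aL.
Qed.

Lemma a0_ge0 k (H : set (zvec k)) (a0 : R) s a :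
  H `<=` [set h | h <> (fun _ => 0)] -> in_TH H a0 s a -> 0 <= a0.
Proof.
move=> Hn [us [sH [Tpos T0]]].
case: (eqVneq s [::]) => [sE|sn].
  by move: T0; rewrite /trig_eval sE big_nil addr0 => ->.
pose ph (h : zvec k) : {poly R} := \sum_(i < k) (h i)%:~R *: 'X^i.
have phE h x : (ph h).[x] = \sum_(i < k) (h i)%:~R * x ^+ i.
  by rewrite horner_sum; apply: eq_bigr => i _; rewrite hornerZ hornerXn.
have ph0 h : h \in s -> ph h != 0.
  move=> hs; have hne := Hn _ (sH _ hs).
  apply/negP => /eqP e; apply: hne; apply/funext => i.
  have := congr1 (fun P : {poly R} => P`_i) e.
  rewrite coef0 coef_sum (bigD1 i) //= big1 ?addr0.
    by rewrite coefZ coefXn eqxx mulr1 => /eqP; rewrite intr_eq0 => /eqP.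
  by move=> j ji; rewrite coefZ coefXn (_ : (i == j :> nat) = false) ?mulr0 //; apply/negbTE; rewrite eq_sym.
pose P := \prod_(h <- s) ph h.
have Pn : P != 0.
  by rewrite prodf_seq_neq0; apply/allP => h hs; rewrite ph0.
pose rs := [seq (n%:R : R) | n <- iota 0 (size P)].
have : ~~ all (root P) rs.
  apply/negP => allr.
  have U : uniq rs.
    rewrite map_inj_uniq ?iota_uniq //.
    by move=> x y /eqP; rewrite eqr_nat => /eqP.
  by have := max_poly_roots Pn allr U; rewrite size_map size_iota ltnn.
case/allPn => _ /mapP [N _ ->] nr.
have hN h : h \in s -> (ph h).[N%:R] != 0.
  move: nr; rewrite /root /P horner_prod prodf_seq_neq0 => /allP A hs.
  exact: A.
pose m (h : zvec k) := \sum_(i < k) h i * (N ^ i)%:Z.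
have mE h : (ph h).[N%:R] = (m h)%:~R.
  rewrite phE rmorph_sum; apply: eq_bigr => i _.
  by rewrite rmorphM /= -natrX.
have m0 h : h \in s -> m h != 0.
  by move=> hs; have := hN h hs; rewrite mE intr_eq0.
pose q := (\sum_(h <- s) `|m h|%N).+1.
have mq h : h \in s -> (`|m h|%N < q)%N.
  by move=> hs; rewrite /q ltnS (bigD1_seq h) //= leq_addr.
have q0 : (0 < q)%N by [].
have qR : (0 < q%:R :> R) by rewrite ltr0n.
pose p (i : 'I_k) := (N ^ i)%:Z.
have : 1%:R / q%:R <= a0.
  apply: (@core _ s a m a0 q 1) => //.
  - move=> h hs j; have := m0 h hs; have := mq h hs => h1 h2.
    have : (j = 0 \/ 1 <= j \/ j <= -1) by lia.
    case=> [?|[?|?]]; nia.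
  - move=> n; have := Tpos (fun i => (n%:R / q%:R) * (p i)%:~R).
    rewrite /trig_eval; congr (_ <= _ + _); apply: eq_bigr => h _.
    rewrite dot_scale; congr (_ * cos _); rewrite -/(m h); ring.
  move: T0; rewrite /trig_eval => <-; congr (_ + _); apply: eq_bigr => h _.
  by rewrite dot0 mulr0 cos0 mulr1.
by apply: le_trans; rewrite divr_ge0 // ler0n.
Qed.

Lemma approx k (H : set (zvec k)) (a0 : R) s a (xi : rvec R k) (e : R) :
  0 < e -> H `<=` [set h | h <> (fun _ => 0)] -> H !=set0 -> in_TH H a0 s a ->
  exists h, H h /\ dist_int (dotZR h xi) <= a0 + e.
Proof.
move=> e0 Hn [h0 Hh0] Hth.
have a00 := @a0_ge0 k H a0 s a Hn Hth.
move: Hth => [us [sH [Tpos T0]]].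
case: (eqVneq s [::]) => [sE|sn].
  exists h0; split => //; move: T0; rewrite /trig_eval sE big_nil addr0 => ->.
  by apply: (le_trans (dist_le1 _)); rewrite lerDl ltW.
pose C : R := 1 + \sum_(h <- s) \sum_(i < k) `|(h i)%:~R : R|.
have C0 : 0 < C.
  by rewrite /C ltr_pwDl // sumr_ge0 // => h _; rewrite sumr_ge0.
pose N := (Num.truncn (C / e)).+1.
have CN : C / e < N%:R by exact: truncnS_gt.
have N0 : (0 < N)%N by [].
have NR : (0 < N%:R :> R) by rewrite ltr0n.
pose p (i : 'I_k) := Num.floor (N%:R * xi i).
have [h [hs hd]] := @rational k H a0 s a N p N0 a00 sn (conj us (conj sH (conj Tpos T0))).
exists h; split; first exact: sH.
apply: (le_trans (dist_lip _ (dotZR h (fun i => N%:R^-1 * (p i)%:~R)))).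
apply: lerD => //.
rewrite /dotZR -sumrB.
apply: (le_trans (ler_norm_sum _ _ _)).
have hb : \sum_(i < k) `|(h i)%:~R : R| <= C.
  rewrite /C (bigD1_seq h) //=.
  have : 0 <= \sum_(i <- s | i != h) \sum_(i0 < k) `|(i i0)%:~R : R|.
    by rewrite sumr_ge0 // => h' _; rewrite sumr_ge0.
  lra.
apply: (@le_trans _ _ ((\sum_(i < k) `|(h i)%:~R : R|) / N%:R)).
  rewrite mulr_suml; apply: ler_sum => i _.
  rewrite -mulrBr normrM ler_wpM2l //.
  have := floor_itv (N%:R * xi i); rewrite rmorphD /= -/(p i) => /andP [f1 f2].
  have e1 : xi i - N%:R^-1 * (p i)%:~R = (N%:R * xi i - (p i)%:~R) / N%:R.
    by field; rewrite gt_eqF.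
  rewrite e1 normrM ger0_norm ?subr_ge0 // gtr0_norm ?invr_gt0 //.
  by rewrite -[X in _ <= X]mul1r ler_pM2r ?invr_gt0 //; move: f2; rewrite (_ : 1%:~R = 1) //; lra.
apply: ltW; apply: (@le_lt_trans _ _ (C / N%:R)).
  by rewrite ler_pM2r ?invr_gt0.
by rewrite ltr_pdivrMr //; move: CN; rewrite ltr_pdivrMr // mulrC.
Qed.
End S.

Theorem proposition3p1 (R : realType) (k : nat) (H : set (zvec k)) :
  (1 <= k)%N ->
  H `<=` [set h | h <> (fun _ => 0%R)] ->
  H !=set0 ->
  (@gamma R k H <= delta H)%E.
Proof.
move=> k1 Hn Hne.
rewrite /gamma /delta.
apply: ge_ereal_sup => _ [xi _ <-].
apply: le_ereal_inf_tmp => _ [a0 [s [a Hth]] <-].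
apply/lee_addgt0Pr => e e0.
have [h [Hh hd]] := @approx R k H a0 s a xi e e0 Hn Hne Hth.
apply: (@le_trans _ _ (dist_int (dotZR h xi))%:E).
  by apply: ereal_inf_lbound; exists h.
by rewrite -EFinD lee_fin.
Qed.
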